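(* Let $p\ge 10$ and let $s$ be an integer with $1\le s<p/3-1$. Suppose Assumption 1 holds and Assumption 2 holds with some $0\le\delta_s<1$. For $k=1,\dots,s$ let $\lambda_k=\lambda_k(\bar D)$. Then there exists a constant $C_L>0$ depending only on $a_u$ and $a_\ell$ such that $$\inf_{\hat f}\ \sup_{f^*\in\mathcal{F}_{T,s,D}}\mathbb{E}\big[\|\hat f-f^*\|_2^2\big]\ \ge\ C_L\max_{1\le k\le s}\left\{\min\left(\frac{k}{p^2\lambda_k^2},\ \frac{k}{(1+\delta_s)T}\log\frac{p-k-1}{k/2}\right)\right\},$$ where the infimum is over all measurable estimators $\hat f$ of $f^*$ based on $y$ (which may depend on $T$, $A$, $D$).
   Context: Setup: $n,p\ge1$ integers, $T>0$. $D\in\mathbb{R}^{p\times p}$ is an orthonormal matrix with columns $d_1,\dots,d_p$, where $d_1=p^{-1/2}(1,\dots,1)^\top$; $\bar D=[d_2,\dots,d_p]\in\mathbb{R}^{p\times(p-1)}$. For an integer $s\ge1$, $\mathcal{F}_{T,s,D}=\{f\in\mathbb{R}^p_{\ge0}:\ \|f\|_1=1,\ \|\bar D^\top f\|_0\le s\}$, where $\|v\|_0$ is the number of nonzero entries. Given a sensing matrix $A\in\mathbb{R}^{n\times p}$ and $f^*\in\mathcal{F}_{T,s,D}$, the observation is $y=(y_1,\dots,y_n)$ with independent $y_i\sim\mathrm{Poisson}(T(Af^* )_i)$; expectation is over $y$. Assumption 1: there are constants $a_\ell<a_u$ and a matrix $\widetilde A\in\mathbb{R}^{n\times p}$ with all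 entries in $[a_\ell/\sqrt n,a_u/\sqrt n]$ such that $A=\big(\widetilde A+\frac{a_u-2a_\ell}{\sqrt n}\mathbb{1}_{n\times p}\big)/\big(2(a_u-a_\ell)\sqrt n\big)$, with $\mathbb{1}_{n\times p}$ the all-ones matrix. Assumption 2: there is $\delta_s\ge0$ such that $\|\widetilde A D u\|_2^2\le(1+\delta_s)\|u\|_2^2$ for all $u\in\mathbb{R}^p$ with $\|u\|_0\le 2s$. $s$-sparse localization: for a matrix $X$ with $m$ columns and $1\le k\le m$, $\lambda_k(X)=\max\{\|Xv\|_\infty:\ v\in\{-1,0,1\}^{m},\ \|v\|_0=k\}$. Here $\log$ is the natural logarithm. *)

(* Defs.v *)
From Stdlib Require Import Reals Lra Lia List Arith.
Import ListNotations.
Open Scope R_scope.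

(* Vectors in R^m are functions nat -> R (only indices < m matter);
   matrices are functions nat -> nat -> R (row, column), 0-based. *)

Fixpoint rsum (m : nat) (g : nat -> R) : R :=
  match m with O => 0 | S m' => rsum m' g + g m' end.

Fixpoint rprod (m : nat) (g : nat -> R) : R :=
  match m with O => 1 | S m' => rprod m' g * g m' end.

Definition nnz (m : nat) (v : nat -> R) : nat :=
  length (filter (fun j => if Req_EM_T (v j) 0 then false else true) (seq 0 m)).

Definition sqnorm (m : nat) (v : nat -> R) : R := rsum m (fun j => v j ^ 2).

Definition orthonormal_D (p : nat) (D : nat -> nat -> R) : Prop :=
  (forall i j, (i < p)%nat -> (j < p)%nat ->
     rsum p (fun k => D k i * D k j) = if Nat.eqb i j then 1 else 0) /\
  (forall k, (k < p)%nat -> D k 0%nat = / sqrt (INR p)).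

(* Dbar^T f, coordinate j (j = 0..p-2) : <d_{j+1}, f> *)
Definition DbarT_apply (p : nat) (D : nat -> nat -> R) (f : nat -> R) : nat -> R :=
  fun j => rsum p (fun i => D i (S j) * f i).

Definition in_F (p s : nat) (D : nat -> nat -> R) (f : nat -> R) : Prop :=
  (forall j, (j < p)%nat -> 0 <= f j) /\
  rsum p (fun j => Rabs (f j)) = 1 /\
  (nnz (p - 1) (DbarT_apply p D f) <= s)%nat.

Definition A_of (n : nat) (a_l a_u : R) (At : nat -> nat -> R) : nat -> nat -> R :=
  fun i j => (At i j + (a_u - 2 * a_l) / sqrt (INR n)) / (2 * (a_u - a_l) * sqrt (INR n)).

Definition assumption1 (n p : nat) (a_l a_u : R) (At : nat -> nat -> R) : Prop :=
  forall i j, (i < n)%nat -> (j < p)%nat ->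
    a_l / sqrt (INR n) <= At i j <= a_u / sqrt (INR n).

Definition assumption2 (n p s : nat) (At D : nat -> nat -> R) (delta : R) : Prop :=
  forall u : nat -> R, (nnz p u <= 2 * s)%nat ->
    sqnorm n (fun i => rsum p (fun j => At i j * rsum p (fun l => D j l * u l)))
    <= (1 + delta) * sqnorm p u.

(* s-sparse localization lambda_k(Dbar), Dbar = [d_2..d_p] has p-1 columns *)
Fixpoint ternary_vectors (m : nat) : list (list R) :=
  match m with
  | O => [[]]
  | S m' => flat_map (fun v => [(-1) :: v; 0 :: v; 1 :: v]) (ternary_vectors m')
  end.

Definition nnz_list (v : list R) : nat :=
  length (filter (fun x => if Req_EM_T x 0 then false else true) v).

Definition Dbar_apply_inf_norm (p : nat) (D : nat -> nat -> R) (v : list R) : R :=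
  fold_right Rmax 0
    (map (fun i => Rabs (rsum (p - 1) (fun j => D i (S j) * nth j v 0))) (seq 0 p)).

Definition lambda_loc (p : nat) (D : nat -> nat -> R) (k : nat) : R :=
  fold_right Rmax 0
    (map (Dbar_apply_inf_norm p D)
       (filter (fun v => Nat.eqb (nnz_list v) k) (ternary_vectors (p - 1)))).

Definition poisson_pmf (mu : R) (k : nat) : R := exp (- mu) * mu ^ k / INR (fact k).

(* sum of F y over all y in {0,..,M-1}^n (y i = 0 for i >= n) *)
Fixpoint box_sum (n M : nat) (F : (nat -> nat) -> R) : R :=
  match n with
  | O => F (fun _ => 0%nat)
  | S n' => rsum M (fun k => box_sum n' M (fun y => F (fun i => if Nat.eqb i n' then k else y i)))
  end.

(* Truncation (to y in {0..M-1}^n) of E ||fhat(y) - f||_2^2, where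
   y_i ~ Poisson(T (A f)_i) independently.  The full expectation is the
   (monotone) limit / supremum over M of these partial sums. *)
Definition partial_risk (n p : nat) (T : R) (A : nat -> nat -> R) (f : nat -> R)
    (fhat : (nat -> nat) -> nat -> R) (M : nat) : R :=
  box_sum n M (fun y =>
    rprod n (fun i => poisson_pmf (T * rsum p (fun j => A i j * f j)) (y i))
    * sqnorm p (fun j => fhat y j - f j)).

Definition lb_term (p : nat) (T delta : R) (D : nat -> nat -> R) (k : nat) : R :=
  Rmin (INR k / (INR p ^ 2 * lambda_loc p D k ^ 2))
       (INR k / ((1 + delta) * T) * ln ((INR p - INR k - 1) / (INR k / 2))).

Definition lb_max (p s : nat) (T delta : R) (D : nat -> nat -> R) : R :=
  fold_right Rmax (lb_term p T delta D 1) (map (lb_term p T delta D) (seq 1 s)).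

(* Main.v *)
Require Import Defs.
From Stdlib Require Import Reals List Arith.
From Stdlib Require Import Lra Lia FunctionalExtensionality Classical.
Import ListNotations.
Open Scope R_scope.


Lemma rsum_ext : forall m f g, (forall i, (i < m)%nat -> f i = g i) -> rsum m f = rsum m g.
Proof. induction m; intros f g H; simpl; [reflexivity|]. rewrite (IHm f g) by (intros; apply H; lia). rewrite H by lia; reflexivity. Qed.

Lemma rsum_le : forall m f g, (forall i, (i < m)%nat -> f i <= g i) -> rsum m f <= rsum m g.
Proof. induction m; intros f g H; simpl; [lra|]. assert (rsum m f <= rsum m g) by (apply IHm; intros; apply H; lia). assert (f m <= g m) by (apply H; lia). lra. Qed.

Lemma rsum_nonneg : forall m f, (forall i, (i < m)%nat -> 0 <= f i) -> 0 <= rsum m f.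
Proof. intros. replace 0 with (rsum m (fun _ => 0)). apply rsum_le; auto. induction m; simpl; auto. rewrite IHm; [lra|]. intros; apply H; lia. Qed.

Lemma rsum_zero : forall m, rsum m (fun _ => 0) = 0.
Proof. induction m; simpl; [auto| rewrite IHm; lra]. Qed.

Lemma rsum_plus : forall m f g, rsum m (fun i => f i + g i) = rsum m f + rsum m g.
Proof. induction m; intros; simpl; [lra| rewrite IHm; lra]. Qed.

Lemma rsum_minus : forall m f g, rsum m (fun i => f i - g i) = rsum m f - rsum m g.
Proof. induction m; intros; simpl; [lra| rewrite IHm; lra]. Qed.

Lemma rsum_scal : forall m c f, rsum m (fun i => c * f i) = c * rsum m f.
Proof. induction m; intros; simpl; [lra| rewrite IHm; lra]. Qed.

Lemma rsum_scal_r : forall m c f, rsum m (fun i => f i * c) = rsum m f * c.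
Proof. induction m; intros; simpl; [lra| rewrite IHm; lra]. Qed.

Lemma rsum_const : forall m c, rsum m (fun _ => c) = INR m * c.
Proof. induction m; intros; simpl rsum; [simpl; lra| rewrite IHm, S_INR; lra]. Qed.

Lemma rsum_exchange : forall a b (f : nat -> nat -> R),
  rsum a (fun i => rsum b (fun j => f i j)) = rsum b (fun j => rsum a (fun i => f i j)).
Proof. induction a; intros; simpl. rewrite rsum_zero; auto. rewrite IHa, <- rsum_plus; auto. Qed.

Lemma rsum_indic : forall m c g, (c < m)%nat ->
  rsum m (fun i => if Nat.eqb i c then g i else 0) = g c.
Proof. induction m; intros c g H; [lia|]. simpl. destruct (Nat.eqb m c) eqn:E.
  - apply Nat.eqb_eq in E; subst. rewrite rsum_ext with (g := fun _ => 0). rewrite rsum_zero; lra.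
    intros i Hi; destruct (Nat.eqb i c) eqn:E2; auto; apply Nat.eqb_eq in E2; lia.
  - apply Nat.eqb_neq in E. rewrite IHm by lia. lra. Qed.

Lemma rsum_indic_r : forall m c g, (c < m)%nat ->
  rsum m (fun i => g i * (if Nat.eqb i c then 1 else 0)) = g c.
Proof. intros. rewrite <- (rsum_indic m c g H). apply rsum_ext; intros; destruct (Nat.eqb i c); lra. Qed.

Lemma rsum_add_range : forall b a f, rsum (a + b) f = rsum a f + rsum b (fun i => f (a + i)%nat).
Proof. induction b; intros; simpl. rewrite Nat.add_0_r; lra. rewrite Nat.add_succ_r; simpl. rewrite IHb; lra. Qed.

Lemma rsum_blocks : forall k q f, rsum (k * q) f = rsum k (fun b => rsum q (fun l => f (b * q + l)%nat)).
Proof. induction k; intros; simpl; auto. replace (q + k * q)%nat with (k * q + q)%nat by lia.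
  rewrite rsum_add_range, IHk; reflexivity. Qed.

Lemma rsum_shift : forall m f, rsum (S m) f = f O + rsum m (fun i => f (S i)).
Proof. intros. replace (S m) with (1 + m)%nat by lia. rewrite rsum_add_range. simpl. lra. Qed.

Lemma rsum_ge_one : forall m f a, (a < m)%nat -> (forall i, (i < m)%nat -> 0 <= f i) -> f a <= rsum m f.
Proof. induction m; intros f a Ha H; [lia|]. simpl. assert (0 <= rsum m f) by (apply rsum_nonneg; intros; apply H; lia).
  destruct (Nat.eq_dec a m). subst; lra. assert (f a <= rsum m f) by (apply IHm; [lia| intros; apply H; lia]).
  assert (0 <= f m) by (apply H; lia). lra. Qed.

Lemma rsum_ge_two : forall m f a b, (a < m)%nat -> (b < m)%nat -> a <> b -> (forall i, (i < m)%nat -> 0 <= f i) -> f a + f b <= rsum m f.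
Proof. induction m; intros f a b Ha Hb Hab H; [lia|]. simpl.
  destruct (Nat.eq_dec a m). subst. assert (f b <= rsum m f) by (apply rsum_ge_one; [lia| intros; apply H; lia]). lra.
  destruct (Nat.eq_dec b m). subst. assert (f a <= rsum m f) by (apply rsum_ge_one; [lia| intros; apply H; lia]). lra.
  assert (f a + f b <= rsum m f) by (apply IHm; auto; try lia; intros; apply H; lia). assert (0 <= f m) by (apply H; lia). lra. Qed.

Lemma rsum_sum_f_R0 : forall n f, rsum (S n) f = sum_f_R0 f n.
Proof. induction n; intros; simpl. lra. simpl in IHn. rewrite <- IHn. simpl. lra. Qed.

Lemma rprod_ext : forall m f g, (forall i, (i < m)%nat -> f i = g i) -> rprod m f = rprod m g.
Proof. induction m; intros f g H; simpl; [reflexivity|]. rewrite (IHm f g) by (intros; apply H; lia). rewrite H by lia; reflexivity. Qed.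

Lemma rprod_pos : forall m f, (forall i, (i < m)%nat -> 0 < f i) -> 0 < rprod m f.
Proof. induction m; intros; simpl; [lra|]. apply Rmult_lt_0_compat; [apply IHm; intros; apply H; lia| apply H; lia]. Qed.

Lemma rprod_nonneg : forall m f, (forall i, (i < m)%nat -> 0 <= f i) -> 0 <= rprod m f.
Proof. induction m; intros; simpl; [lra|]. apply Rmult_le_pos; [apply IHm; intros; apply H; lia| apply H; lia]. Qed.

Lemma rprod_le : forall m f g, (forall i, (i < m)%nat -> 0 <= f i <= g i) -> rprod m f <= rprod m g.
Proof. induction m; intros f g H; simpl; [lra|]. apply Rmult_le_compat.
  apply rprod_nonneg; intros; apply H; lia. apply H; lia. apply IHm; intros; apply H; lia. apply H; lia. Qed.

Lemma rprod_mult : forall m f g, rprod m (fun i => f i * g i) = rprod m f * rprod m g.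
Proof. induction m; intros; simpl; [lra| rewrite IHm; lra]. Qed.

Lemma rprod_inv : forall m f, rprod m (fun i => / f i) = / rprod m f.
Proof. induction m; intros; simpl. lra. rewrite IHm. rewrite Rinv_mult. auto. Qed.

Lemma rprod_exp : forall m f, rprod m (fun i => exp (f i)) = exp (rsum m f).
Proof. induction m; intros; simpl. rewrite exp_0; auto. rewrite IHm, exp_plus; auto. Qed.

Lemma rprod_ge : forall m f, (forall i, (i < m)%nat -> 0 <= f i <= 1) -> 1 - rsum m (fun i => 1 - f i) <= rprod m f.
Proof. induction m; intros f H; simpl; [lra|]. assert (1 - rsum m (fun i => 1 - f i) <= rprod m f) by (apply IHm; intros; apply H; lia).
  assert (0 <= rprod m f <= 1). split. apply rprod_nonneg; intros; apply H; lia.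
  replace 1 with (rprod m (fun _ => 1)). apply rprod_le; intros; split; [apply H; lia| apply H; lia]. clear; induction m; simpl; lra.
  assert (0 <= f m <= 1) by (apply H; lia). nra. Qed.

Definition upd (y : nat -> nat) (b j : nat) : nat -> nat := fun i => if Nat.eqb i b then j else y i.
Definition inbox (n M : nat) (y : nat -> nat) : Prop := forall i, (i < n)%nat -> (y i < M)%nat.

Lemma box_sum_S : forall n M F, box_sum (S n) M F = rsum M (fun x => box_sum n M (fun y => F (upd y n x))).
Proof. reflexivity. Qed.

Lemma box_sum_ext : forall n M F G, (forall y, F y = G y) -> box_sum n M F = box_sum n M G.
Proof. intros. replace F with G; auto. extensionality y; auto. Qed.

Lemma inbox_upd : forall n M y x, inbox n M y -> (x < M)%nat -> inbox (S n) M (upd y n x).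
Proof. unfold inbox, upd; intros. destruct (Nat.eqb i n) eqn:E; auto. apply Nat.eqb_neq in E; apply H; lia. Qed.

Lemma box_sum_le_in : forall n M F G, (forall y, inbox n M y -> F y <= G y) -> box_sum n M F <= box_sum n M G.
Proof. induction n; intros M F G H; simpl. apply H. unfold inbox; intros; lia.
  apply rsum_le; intros x Hx. apply IHn; intros y Hy. apply H. apply inbox_upd; auto. Qed.

Lemma box_sum_plus : forall n M F G, box_sum n M (fun y => F y + G y) = box_sum n M F + box_sum n M G.
Proof. induction n; intros; simpl; auto. rewrite <- rsum_plus. apply rsum_ext; intros. apply IHn. Qed.

Lemma box_sum_scal : forall n M c F, box_sum n M (fun y => c * F y) = c * box_sum n M F.
Proof. induction n; intros; simpl; auto. rewrite <- rsum_scal. apply rsum_ext; intros. apply IHn. Qed.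

Lemma box_sum_minus : forall n M F G, box_sum n M (fun y => F y - G y) = box_sum n M F - box_sum n M G.
Proof. intros. rewrite (box_sum_ext n M _ (fun y => F y + (-1) * G y)) by (intros; lra).
  rewrite box_sum_plus, box_sum_scal; lra. Qed.

Lemma box_sum_rsum : forall n M a (F : nat -> (nat -> nat) -> R),
  box_sum n M (fun y => rsum a (fun j => F j y)) = rsum a (fun j => box_sum n M (F j)).
Proof. induction a; intros; simpl. induction n; simpl; auto. rewrite rsum_ext with (g := fun _ => 0); [apply rsum_zero| intros; apply IHn].
  rewrite box_sum_plus, IHa; auto. Qed.

Lemma box_sum_const : forall n M c, box_sum n M (fun _ => c) = INR M ^ n * c.
Proof. induction n; intros; simpl. lra. rewrite rsum_ext with (g := fun _ => INR M ^ n * c) by (intros; apply IHn).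
  rewrite rsum_const; lra. Qed.

Lemma box_sum_nonneg : forall n M F, (forall y, 0 <= F y) -> 0 <= box_sum n M F.
Proof. intros. replace 0 with (box_sum n M (fun _ => 0)). apply box_sum_le_in; auto. rewrite box_sum_const; lra. Qed.

Lemma box_sum_prod : forall n M (g : nat -> nat -> R),
  box_sum n M (fun y => rprod n (fun i => g i (y i))) = rprod n (fun i => rsum M (g i)).
Proof. induction n; intros; simpl; auto. rewrite <- rsum_scal.
  apply rsum_ext; intros x Hx.
  rewrite (box_sum_ext n M _ (fun y => g n x * rprod n (fun i => g i (y i)))).
  rewrite box_sum_scal, IHn; lra.
  intros y. rewrite (rprod_ext n _ (fun i => g i (y i))). unfold upd. rewrite Nat.eqb_refl; lra.
  intros i Hi. unfold upd. destruct (Nat.eqb i n) eqn:E; auto. apply Nat.eqb_eq in E; lia. Qed.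

Lemma box_sum_exists : forall n M F c, INR M ^ n * c < box_sum n M F -> exists y, inbox n M y /\ c < F y.
Proof. intros. apply NNPP; intro Hn. assert (box_sum n M F <= box_sum n M (fun _ => c)).
  apply box_sum_le_in; intros y Hy. apply Rnot_lt_le; intro; apply Hn; eauto.
  rewrite box_sum_const in H0; lra. Qed.

Lemma upd_upd_same : forall y b x j, upd (upd y b x) b j = upd y b j.
Proof. intros; extensionality i; unfold upd; destruct (Nat.eqb i b); auto. Qed.
Lemma upd_upd_comm : forall y b c x j, b <> c -> upd (upd y c x) b j = upd (upd y b j) c x.
Proof. intros; extensionality i; unfold upd. destruct (Nat.eqb i b) eqn:E1; destruct (Nat.eqb i c) eqn:E2; auto.
  apply Nat.eqb_eq in E1; apply Nat.eqb_eq in E2; subst; lia. Qed.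

Lemma box_resample : forall n M b F, (b < n)%nat ->
  box_sum n M (fun v => rsum M (fun j => F (upd v b j))) = INR M * box_sum n M F.
Proof. induction n; intros M b F Hb; [lia|]. rewrite !box_sum_S.
  destruct (Nat.eq_dec b n).
  - subst. rewrite rsum_ext with (g := fun _ => box_sum n M (fun y => rsum M (fun j => F (upd y n j)))).
    rewrite rsum_const, box_sum_rsum; auto.
    intros x Hx. apply box_sum_ext; intros y. apply rsum_ext; intros. rewrite upd_upd_same; auto.
  - rewrite <- rsum_scal. apply rsum_ext; intros x Hx.
    rewrite (box_sum_ext n M _ (fun y => rsum M (fun j => (fun z => F (upd z n x)) (upd y b j)))).
    apply (IHn M b (fun z => F (upd z n x))); lia. intros y; apply rsum_ext; intros. rewrite upd_upd_comm; auto. Qed.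

Definition Sexp (M : nat) (x : R) : R := rsum M (fun y => x ^ y / INR (fact y)).

Lemma exp_in_exp : forall x, exp_in x (exp x).
Proof. intros. unfold exp. destruct (exist_exp x); simpl; auto. Qed.

Lemma Sexp_cv : forall x, Un_cv (fun N => Sexp (S N) x) (exp x).
Proof. intros x eps He. destruct (exp_in_exp x eps He) as [N HN]. exists N; intros n Hn.
  unfold Sexp; rewrite rsum_sum_f_R0. unfold R_dist in *. 
  replace (sum_f_R0 (fun y => x ^ y / INR (fact y)) n) with (sum_f_R0 (fun i => / INR (fact i) * x ^ i) n). apply HN; lia.
  apply sum_eq; intros; unfold Rdiv; lra. Qed.

Lemma cv_shift : forall u l M, Un_cv u l -> Un_cv (fun N => u (N + M)%nat) l.
Proof. intros u l M H eps He. destruct (H eps He) as [N HN]. exists N; intros; apply HN; lia. Qed.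

Lemma cv_const : forall c, Un_cv (fun _ => c) c.
Proof. intros c eps He. exists O; intros. unfold R_dist. rewrite Rminus_diag, Rabs_R0; auto. Qed.

Lemma fact_pos : forall y, 0 < INR (fact y).
Proof. intros; apply lt_0_INR; apply lt_O_fact. Qed.

Lemma exp_tail : forall M mu U, 0 <= mu <= U -> 0 <= exp mu - Sexp M mu <= exp U - Sexp M U.
Proof. intros M mu U [H0 H1].
  assert (Hc : forall x, Un_cv (fun N => Sexp (S (N + M)) x - Sexp M x) (exp x - Sexp M x)).
  { intros x. apply CV_minus. apply (cv_shift (fun N => Sexp (S N) x)). apply Sexp_cv. apply cv_const. }
  assert (Heq : forall x N, Sexp (S (N + M)) x - Sexp M x = rsum (S N) (fun i => x ^ (M + i) / INR (fact (M + i)))).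
  { intros. unfold Sexp. replace (S (N + M)) with (M + S N)%nat by lia. rewrite rsum_add_range. lra. }
  split.
  - apply (Rle_cv_lim (Un := fun _ => 0) (Vn := fun N => Sexp (S (N + M)) mu - Sexp M mu)); [| apply cv_const | apply Hc].
    intros N; rewrite Heq. apply rsum_nonneg; intros. apply Rmult_le_pos. apply pow_le; lra. left; apply Rinv_0_lt_compat, fact_pos.
  - apply (Rle_cv_lim (Un := fun N => Sexp (S (N + M)) mu - Sexp M mu) (Vn := fun N => Sexp (S (N + M)) U - Sexp M U)); [| apply Hc | apply Hc].
    intros N; rewrite !Heq. apply rsum_le; intros. apply Rmult_le_compat_r. left; apply Rinv_0_lt_compat, fact_pos.
    apply pow_incr; lra. Qed.

Lemma Sexp_le : forall M x, 0 <= x -> Sexp M x <= exp x.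
Proof. intros. destruct (exp_tail M x x); lra. Qed.

Lemma exp_le_1 : forall x, x <= 0 -> exp x <= 1.
Proof. intros. rewrite <- exp_0. destruct (Req_dec x 0). subst; lra. left; apply exp_increasing; lra. Qed.

Lemma pmf_sum : forall M mu, rsum M (poisson_pmf mu) = exp (- mu) * Sexp M mu.
Proof. intros. unfold Sexp. rewrite <- rsum_scal. apply rsum_ext; intros. unfold poisson_pmf, Rdiv. lra. Qed.

Lemma pbox_bounds : forall M mu U, 0 <= mu <= U -> 1 - (exp U - Sexp M U) <= rsum M (poisson_pmf mu) <= 1.
Proof. intros. rewrite pmf_sum. destruct (exp_tail M mu U H).
  assert (exp (-mu) * exp mu = 1) by (rewrite <- exp_plus; replace (-mu+mu) with 0 by lra; apply exp_0).
  assert (0 < exp (-mu)) by apply exp_pos. assert (exp (-mu) <= 1) by (apply exp_le_1; lra).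
  split; nra. Qed.

Lemma tail_small : forall U eps, 0 < eps -> exists M, exp U - Sexp M U < eps.
Proof. intros. destruct (Sexp_cv U eps H) as [N HN]. exists (S N). specialize (HN N (le_n _)).
  unfold R_dist in HN. apply Rabs_def2 in HN. lra. Qed.

Lemma pmf_pos : forall mu y, 0 < mu -> 0 < poisson_pmf mu y.
Proof. intros. unfold poisson_pmf. apply Rdiv_lt_0_compat. apply Rmult_lt_0_compat. apply exp_pos. apply pow_lt; auto. apply fact_pos. Qed.

Lemma pmf_nonneg : forall mu y, 0 <= mu -> 0 <= poisson_pmf mu y.
Proof. intros. unfold poisson_pmf. apply Rmult_le_pos. apply Rmult_le_pos. left; apply exp_pos. apply pow_le; auto. left; apply Rinv_0_lt_compat, fact_pos. Qed.

Lemma chi_coord : forall M a b, 0 <= a -> 0 < b ->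
  rsum M (fun y => poisson_pmf a y ^ 2 / poisson_pmf b y) <= exp ((a - b) ^ 2 / b).
Proof. intros M a b Ha Hb.
  assert (E : forall y, poisson_pmf a y ^ 2 / poisson_pmf b y = exp (- 2 * a + b) * ((a * a / b) ^ y / INR (fact y))).
  { intros y. unfold poisson_pmf. replace (exp (-2 * a + b)) with (exp (-a) * exp (-a) * / exp (- b)).
    unfold Rdiv. rewrite !Rpow_mult_distr.
    assert (0 < INR (fact y)) by apply fact_pos. assert (0 < b ^ y) by (apply pow_lt; auto).
    replace ((/ b) ^ y) with (/ (b ^ y)) by (rewrite pow_inv; auto).
    assert (0 < exp (-b)) by apply exp_pos. field. repeat split; lra.
    rewrite <- (exp_Ropp (-b)), <- !exp_plus. f_equal; lra. }
  rewrite (rsum_ext M _ (fun y => exp (- 2 * a + b) * ((a * a / b) ^ y / INR (fact y)))) by (intros; apply E).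
  rewrite rsum_scal. fold (Sexp M (a * a / b)).
  assert (Sexp M (a * a / b) <= exp (a * a / b)) by (apply Sexp_le; unfold Rdiv; apply Rmult_le_pos; [nra| left; apply Rinv_0_lt_compat; auto]).
  replace ((a - b) ^ 2 / b) with (-2 * a + b + a * a / b) by (field; lra). rewrite (exp_plus (-2 * a + b) (a * a / b)).
  apply Rmult_le_compat_l; auto. left; apply exp_pos. Qed.

Lemma sqrt_p_pos : forall p, (1 <= p)%nat -> 0 < sqrt (INR p).
Proof. intros. apply sqrt_lt_R0. apply lt_0_INR; lia. Qed.

Lemma col_sum_zero : forall p D c, orthonormal_D p D -> (1 <= c < p)%nat -> rsum p (fun k => D k c) = 0.
Proof. intros p D c [Ho H0] Hc. specialize (Ho O c ltac:(lia) ltac:(lia)). simpl in Ho.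
  destruct c; [lia|]. rewrite (rsum_ext p _ (fun k => / sqrt (INR p) * D k (S c))) in Ho by (intros; rewrite H0; auto).
  rewrite rsum_scal in Ho. assert (0 < / sqrt (INR p)) by (apply Rinv_0_lt_compat, sqrt_p_pos; lia). nra. Qed.

Lemma sq_rsum : forall K g, rsum K g ^ 2 = rsum K (fun r => rsum K (fun r' => g r * g r')).
Proof. intros. rewrite (rsum_ext K (fun r => rsum K (fun r' => g r * g r')) (fun r => g r * rsum K g)) by (intros; rewrite rsum_scal; auto).
  rewrite rsum_scal_r. ring. Qed.

Lemma bessel : forall p D K x, orthonormal_D p D -> (K <= p - 1)%nat ->
  rsum K (fun r => (rsum p (fun i => D i (S r) * x i)) ^ 2) <= rsum p (fun i => x i ^ 2).
Proof. intros p D K x [Ho _] HK.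
  set (a := fun r => rsum p (fun i => D i (S r) * x i)).
  set (Sg := fun i => rsum K (fun r => a r * D i (S r))).
  assert (H0 : 0 <= rsum p (fun i => (x i - Sg i) ^ 2)) by (apply rsum_nonneg; intros; apply pow2_ge_0).
  rewrite (rsum_ext p _ (fun i => x i ^ 2 - 2 * (x i * Sg i) + Sg i ^ 2)) in H0 by (intros; ring).
  rewrite rsum_plus, rsum_minus, rsum_scal in H0.
  assert (E1 : rsum p (fun i => x i * Sg i) = rsum K (fun r => a r ^ 2)).
  { unfold Sg. rewrite (rsum_ext p _ (fun i => rsum K (fun r => a r * (D i (S r) * x i)))) by (intros; rewrite <- rsum_scal; apply rsum_ext; intros; ring).
    rewrite rsum_exchange. apply rsum_ext; intros r Hr. rewrite rsum_scal. unfold a; ring. }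
  assert (E2 : rsum p (fun i => Sg i ^ 2) = rsum K (fun r => a r ^ 2)).
  { unfold Sg. rewrite (rsum_ext p _ (fun i => rsum K (fun r => rsum K (fun r' => a r * a r' * (D i (S r) * D i (S r')))))) by (intros; rewrite sq_rsum; apply rsum_ext; intros; apply rsum_ext; intros; ring).
    rewrite rsum_exchange. apply rsum_ext; intros r Hr. rewrite rsum_exchange.
    rewrite (rsum_ext K _ (fun r' => (a r * a r') * (if Nat.eqb r' r then 1 else 0))).
    rewrite rsum_indic_r by auto. ring.
    intros r' Hr'. rewrite rsum_scal. rewrite Ho by lia.
    destruct (Nat.eq_dec r r'). subst. rewrite !Nat.eqb_refl. ring.
    replace (Nat.eqb (S r) (S r')) with false by (symmetry; apply Nat.eqb_neq; lia).
    replace (Nat.eqb r' r) with false by (symmetry; apply Nat.eqb_neq; lia). ring. }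
  rewrite E1, E2 in H0. unfold a in H0. lra. Qed.

Definition uv (k q : nat) (v : nat -> nat) (j : nat) : R :=
  if andb (Nat.ltb j (k * q)) (Nat.eqb (j mod q)%nat (v (j / q)%nat)) then 1 else 0.

Lemma divmod_block : forall q b l, (l < q)%nat -> ((b * q + l) / q = b /\ (b * q + l) mod q = l)%nat.
Proof. intros. split. symmetry; apply (Nat.div_unique _ _ _ l); lia. symmetry; apply (Nat.mod_unique _ _ b); lia. Qed.

Lemma uv_block : forall k q v b l, (b < k)%nat -> (l < q)%nat ->
  uv k q v (b * q + l) = if Nat.eqb l (v b) then 1 else 0.
Proof. intros. unfold uv. destruct (divmod_block q b l H0) as [E1 E2]. rewrite E1, E2.
  replace (Nat.ltb (b * q + l) (k * q)) with true. reflexivity. symmetry; apply Nat.ltb_lt. nia. Qed.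

Lemma uv_out : forall k q v j, (k * q <= j)%nat -> uv k q v j = 0.
Proof. intros. unfold uv. replace (Nat.ltb j (k * q)) with false; auto. symmetry; apply Nat.ltb_ge; auto. Qed.

Lemma uv_01 : forall k q v j, uv k q v j = 0 \/ uv k q v j = 1.
Proof. intros; unfold uv; destruct (andb _ _); auto. Qed.

Lemma uv_dec : forall k q j, (0 < q)%nat -> (j < k * q)%nat -> (j = j / q * q + j mod q /\ j / q < k /\ j mod q < q)%nat.
Proof. intros. pose proof (Nat.div_mod_eq j q). pose proof (Nat.mod_upper_bound j q ltac:(lia)).
  split. lia. split; auto. apply Nat.div_lt_upper_bound; lia. Qed.

Definition nzi (x : R) : nat := if Req_EM_T x 0 then 0%nat else 1%nat.

Lemma nnz_S : forall m u, nnz (S m) u = (nnz m u + nzi (u m))%nat.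
Proof. intros. unfold nnz, nzi. rewrite seq_S, filter_app, length_app. simpl. destruct (Req_EM_T (u m) 0); simpl; lia. Qed.

Lemma nnz_ext : forall m u w, (forall j, (j < m)%nat -> u j = w j) -> nnz m u = nnz m w.
Proof. induction m; intros; auto. rewrite !nnz_S. rewrite (IHm u w) by (intros; apply H; lia). rewrite H by lia; auto. Qed.

Lemma nzi_0 : nzi 0 = 0%nat. Proof. unfold nzi; destruct (Req_EM_T 0 0); auto; lra. Qed.
Lemma nzi_1 : nzi 1 = 1%nat. Proof. unfold nzi; destruct (Req_EM_T 1 0); auto; lra. Qed.

Lemma nnz_scal : forall m (t : R) (u : nat -> R), (nnz m (fun j => (t * u j)%R) <= nnz m u)%nat.
Proof. induction m; intros; simpl; auto. rewrite !nnz_S. specialize (IHm t u). unfold nzi.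
  destruct (Req_EM_T (t * u m) 0); destruct (Req_EM_T (u m) 0); try lia. rewrite e in n. lra. Qed.

Lemma nnz_two : forall m u c1 c2, (forall j, u j <> 0 -> j = c1 \/ j = c2) ->
  (nnz m u <= (if Nat.ltb c1 m then 1 else 0) + (if Nat.ltb c2 m then 1 else 0))%nat.
Proof. induction m; intros; simpl; auto. rewrite nnz_S. specialize (IHm u c1 c2 H). unfold nzi.
  destruct (Req_EM_T (u m) 0).
  - destruct (Nat.ltb c1 m) eqn:E1; destruct (Nat.ltb c1 (S m)) eqn:E1'; destruct (Nat.ltb c2 m) eqn:E2; destruct (Nat.ltb c2 (S m)) eqn:E2';
    rewrite ?Nat.ltb_lt, ?Nat.ltb_ge in *; lia.
  - destruct (H m n).
    + subst. destruct (Nat.ltb c1 c1) eqn:E1; destruct (Nat.ltb c1 (S c1)) eqn:E1'; destruct (Nat.ltb c2 c1) eqn:E2; destruct (Nat.ltb c2 (S c1)) eqn:E2';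
      rewrite ?Nat.ltb_lt, ?Nat.ltb_ge in *; lia.
    + subst. destruct (Nat.ltb c1 c2) eqn:E1; destruct (Nat.ltb c1 (S c2)) eqn:E1'; destruct (Nat.ltb c2 c2) eqn:E2; destruct (Nat.ltb c2 (S c2)) eqn:E2';
      rewrite ?Nat.ltb_lt, ?Nat.ltb_ge in *; lia. Qed.

Lemma nnz_uv_block : forall k q v b, (b < k)%nat -> (v b < q)%nat -> nnz (b * q) (uv k q v) = b ->
  forall l, (l <= q)%nat -> nnz (b * q + l) (uv k q v) = (b + if Nat.ltb (v b) l then 1 else 0)%nat.
Proof. intros k q v b Hb Hv H0. induction l; intros Hl.
  - rewrite Nat.add_0_r, H0. destruct (Nat.ltb (v b) 0) eqn:E; [apply Nat.ltb_lt in E; lia| lia].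
  - rewrite Nat.add_succ_r, nnz_S, IHl by lia. rewrite uv_block by lia.
    destruct (Nat.eqb l (v b)) eqn:E0; [rewrite nzi_1| rewrite nzi_0];
    destruct (Nat.ltb (v b) l) eqn:E1; destruct (Nat.ltb (v b) (S l)) eqn:E2;
    rewrite ?Nat.eqb_eq, ?Nat.eqb_neq, ?Nat.ltb_lt, ?Nat.ltb_ge in *; lia. Qed.

Lemma nnz_uv_blocks : forall k q v, (forall i, (i < k)%nat -> (v i < q)%nat) ->
  forall b, (b <= k)%nat -> nnz (b * q) (uv k q v) = b.
Proof. intros k q v Hv. induction b; intros Hb. simpl; auto.
  replace (S b * q)%nat with (b * q + q)%nat by lia. rewrite (nnz_uv_block k q v b) by (auto; lia).
  replace (Nat.ltb (v b) q) with true by (symmetry; apply Nat.ltb_lt; apply Hv; lia). lia. Qed.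

Lemma nnz_uv : forall k q v m, (forall i, (i < k)%nat -> (v i < q)%nat) -> (k * q <= m)%nat -> nnz m (uv k q v) = k.
Proof. intros. replace m with (k * q + (m - k * q))%nat by lia. generalize (m - k * q)%nat. induction n.
  rewrite Nat.add_0_r. apply nnz_uv_blocks; auto.
  rewrite Nat.add_succ_r, nnz_S, IHn, uv_out, nzi_0 by lia. lia. Qed.

Lemma filter_map_len : forall (g : R -> bool) (u : nat -> R) l, length (filter g (map u l)) = length (filter (fun j => g (u j)) l).
Proof. induction l; simpl; auto. destruct (g (u a)); simpl; auto. Qed.

Lemma in_ternary : forall l, (forall x, In x l -> x = -1 \/ x = 0 \/ x = 1) -> In l (ternary_vectors (length l)).
Proof. induction l; intros H; simpl; auto. apply in_flat_map. exists l. split. apply IHl; intros; apply H; simpl; auto.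
  destruct (H a (or_introl eq_refl)) as [->|[->| ->]]; simpl; auto. Qed.

Lemma fold_Rmax_ge : forall l a x, In x l -> x <= fold_right Rmax a l.
Proof. induction l; intros; simpl in *. contradiction. destruct H. subst; apply Rmax_l.
  eapply Rle_trans; [apply IHl; eauto| apply Rmax_r]. Qed.

Lemma fold_Rmax_ge0 : forall l a, a <= fold_right Rmax a l.
Proof. induction l; intros; simpl. lra. eapply Rle_trans; [apply IHl| apply Rmax_r]. Qed.

Lemma lam_bound : forall p D k (u : nat -> R), nnz (p - 1) u = k -> (forall j, u j = 0 \/ u j = 1) ->
  forall i, (i < p)%nat -> Rabs (rsum (p - 1) (fun j => D i (S j) * u j)) <= lambda_loc p D k.
Proof. intros p D k u Hn H01 i Hi. set (L := map u (seq 0 (p - 1))).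
  assert (HL : length L = (p - 1)%nat) by (unfold L; rewrite length_map, length_seq; auto).
  assert (Hnth : forall j, (j < p - 1)%nat -> nth j L 0 = u j).
  { intros. unfold L. rewrite (nth_indep _ 0 (u O)) by (rewrite length_map, length_seq; auto). rewrite map_nth, seq_nth; auto. }
  apply Rle_trans with (Dbar_apply_inf_norm p D L).
  - unfold Dbar_apply_inf_norm. apply fold_Rmax_ge. apply in_map_iff. exists i. split.
    f_equal. apply rsum_ext; intros. rewrite Hnth; auto. apply in_seq; lia.
  - unfold lambda_loc. apply fold_Rmax_ge. apply in_map. apply filter_In. split.
    rewrite <- HL. apply in_ternary. intros x Hx. unfold L in Hx. apply in_map_iff in Hx. destruct Hx as [j [<- _]].
    destruct (H01 j); auto.
    apply Nat.eqb_eq. unfold nnz_list, L. rewrite filter_map_len. apply Hn. Qed.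

Definition wv (k q : nat) (v : nat -> nat) (l : nat) : R :=
  match l with O => 0 | S j => uv k q v j end.

Definition fv (p : nat) (D : nat -> nat -> R) (t : R) (k q : nat) (v : nat -> nat) (i : nat) : R :=
  / INR p + t * rsum p (fun l => D i l * wv k q v l).

Lemma fv_inner : forall p D t k q v j, orthonormal_D p D -> (10 <= p)%nat -> (j < p - 1)%nat ->
  rsum p (fun i => D i (S j) * fv p D t k q v i) = t * uv k q v j.
Proof. intros p D t k q v j HD Hp Hj. unfold fv.
  rewrite (rsum_ext p _ (fun i => / INR p * D i (S j) + t * rsum p (fun l => wv k q v l * (D i (S j) * D i l)))).
  rewrite rsum_plus, rsum_scal, rsum_scal, col_sum_zero by (auto; lia). rewrite rsum_exchange.
  rewrite (rsum_ext p _ (fun l => wv k q v l * (if Nat.eqb l (S j) then 1 else 0))).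
  rewrite rsum_indic_r by lia. simpl. ring.
  intros l Hl. rewrite rsum_scal. destruct HD as [Ho _]. rewrite Ho by lia. rewrite Nat.eqb_sym. auto.
  intros i Hi. rewrite Rmult_plus_distr_l. f_equal. ring.
  transitivity (t * (D i (S j) * rsum p (fun l => D i l * wv k q v l))). ring. f_equal. rewrite <- rsum_scal. apply rsum_ext; intros; ring. Qed.

Lemma fv_sum : forall p (D : nat -> nat -> R) t k q v, orthonormal_D p D -> (10 <= p)%nat -> rsum p (fv p D t k q v) = 1.
Proof. intros. unfold fv. rewrite rsum_plus, rsum_const, rsum_scal, rsum_exchange.
  rewrite (rsum_ext p _ (fun _ => 0)). rewrite rsum_zero. field. apply not_0_INR; lia.
  intros l Hl. rewrite (rsum_ext p _ (fun i => wv k q v l * D i l)) by (intros; ring). rewrite rsum_scal.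
  destruct l. simpl; ring. rewrite col_sum_zero by (auto; lia). ring. Qed.

Lemma wv_shift : forall p (D : nat -> nat -> R) k q v i, (1 <= p)%nat ->
  rsum p (fun l => D i l * wv k q v l) = rsum (p - 1) (fun j => D i (S j) * uv k q v j).
Proof. intros. replace p with (S (p - 1)) at 1 by lia. rewrite rsum_shift. simpl. ring. Qed.

Lemma fv_nonneg : forall p D t k q v, (10 <= p)%nat -> 0 <= t -> t * lambda_loc p D k <= / INR p ->
  (forall i, (i < k)%nat -> (v i < q)%nat) -> (k * q <= p - 1)%nat ->
  forall i, (i < p)%nat -> 0 <= fv p D t k q v i.
Proof. intros. unfold fv. rewrite wv_shift by lia.
  assert (Rabs (rsum (p - 1) (fun j => D i (S j) * uv k q v j)) <= lambda_loc p D k).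
  apply lam_bound; auto. apply nnz_uv; auto. intros; apply uv_01.
  assert (t * Rabs (rsum (p - 1) (fun j => D i (S j) * uv k q v j)) <= / INR p) by (eapply Rle_trans; [apply Rmult_le_compat_l; eauto| auto]).
  pose proof (Rle_abs (- rsum (p - 1) (fun j => D i (S j) * uv k q v j))) as Hab. rewrite Rabs_Ropp in Hab.
  assert (0 < / INR p) by (apply Rinv_0_lt_compat, lt_0_INR; lia). nra. Qed.

Lemma fv_inF : forall p s D t k q v, orthonormal_D p D -> (10 <= p)%nat -> 0 <= t -> t * lambda_loc p D k <= / INR p ->
  (forall i, (i < k)%nat -> (v i < q)%nat) -> (k * q <= p - 1)%nat -> (k <= s)%nat ->
  in_F p s D (fv p D t k q v).
Proof. intros. split; [|split].
  - intros; eapply fv_nonneg; eauto.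
  - rewrite (rsum_ext p _ (fv p D t k q v)). apply fv_sum; auto. intros; apply Rabs_right. apply Rle_ge; eapply fv_nonneg; eauto.
  - unfold DbarT_apply. rewrite (nnz_ext _ _ (fun j => t * uv k q v j)) by (intros; apply fv_inner; auto).
    eapply Nat.le_trans. apply nnz_scal. rewrite nnz_uv; auto. Qed.

Definition acoef (p : nat) (D : nat -> nat -> R) (g : nat -> R) (r : nat) : R := rsum p (fun i => D i (S r) * g i).
Definition blk (p : nat) (D : nat -> nat -> R) (t : R) (q : nat) (g : nat -> R) (b j : nat) : R :=
  rsum q (fun l => (acoef p D g (b * q + l) - t * (if Nat.eqb l j then 1 else 0)) ^ 2).
Definition ind (p : nat) (D : nat -> nat -> R) (t : R) (q : nat) (g : nat -> R) (b j : nat) : R :=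
  if Rlt_dec (blk p D t q g b j) (t ^ 2 / 2) then 1 else 0.

Lemma loss_bound : forall p D t k q v (g : nat -> R), orthonormal_D p D -> (10 <= p)%nat -> (k * q <= p - 1)%nat ->
  (forall i, (i < k)%nat -> (v i < q)%nat) ->
  t ^ 2 / 2 * rsum k (fun b => 1 - ind p D t q g b (v b)) <= sqnorm p (fun j => g j - fv p D t k q v j).
Proof. intros. unfold sqnorm. eapply Rle_trans; [| apply (bessel p D (k * q)); auto].
  rewrite rsum_blocks, <- rsum_scal. apply rsum_le; intros b Hb.
  apply Rle_trans with (blk p D t q g b (v b)).
  - unfold ind. assert (0 <= blk p D t q g b (v b)) by (apply rsum_nonneg; intros; apply pow2_ge_0). destruct (Rlt_dec _ _); lra.
  - unfold blk. apply Req_le. apply rsum_ext; intros l Hl. f_equal.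
    rewrite (rsum_ext p _ (fun i => D i (S (b * q + l)) * g i - D i (S (b * q + l)) * fv p D t k q v i)) by (intros; ring).
    rewrite rsum_minus, fv_inner by (auto; nia). rewrite uv_block by auto. unfold acoef. ring. Qed.

Lemma ind_01 : forall p D t q g b j, ind p D t q g b j = 0 \/ ind p D t q g b j = 1.
Proof. intros; unfold ind; destruct (Rlt_dec _ _); auto. Qed.

Lemma ind_disj : forall p D t q g b j j', (j < q)%nat -> (j' < q)%nat -> j <> j' ->
  ind p D t q g b j + ind p D t q g b j' <= 1.
Proof. intros. unfold ind. destruct (Rlt_dec _ _) as [H2|H2]; destruct (Rlt_dec _ _) as [H3|H3]; try lra.
  exfalso. unfold blk in *.
  assert (Hs : rsum q (fun l => (t * (if Nat.eqb l j then 1 else 0) - t * (if Nat.eqb l j' then 1 else 0)) ^ 2) <=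
     2 * rsum q (fun l => (acoef p D g (b * q + l) - t * (if Nat.eqb l j then 1 else 0)) ^ 2) +
     2 * rsum q (fun l => (acoef p D g (b * q + l) - t * (if Nat.eqb l j' then 1 else 0)) ^ 2)).
  { rewrite <- !rsum_scal, <- rsum_plus. apply rsum_le; intros. set (a := acoef p D g (b * q + i)).
    set (x := t * (if Nat.eqb i j then 1 else 0)). set (y := t * (if Nat.eqb i j' then 1 else 0)). cbv beta. pose proof (pow2_ge_0 (2 * a - x - y)). nra. }
  pose proof (rsum_ge_two q (fun l => (t * (if Nat.eqb l j then 1 else 0) - t * (if Nat.eqb l j' then 1 else 0)) ^ 2) j j' H H0 H1 ltac:(intros; apply pow2_ge_0)).
  cbv beta in H4. rewrite !Nat.eqb_refl in H4. replace (Nat.eqb j j') with false in H4 by (symmetry; apply Nat.eqb_neq; auto).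
  replace (Nat.eqb j' j) with false in H4 by (symmetry; apply Nat.eqb_neq; auto). nra. Qed.

Lemma sum01_le1 : forall m (I : nat -> R), (forall j, I j = 0 \/ I j = 1) ->
  (forall j j', (j < m)%nat -> (j' < m)%nat -> j <> j' -> I j + I j' <= 1) -> rsum m I <= 1.
Proof. induction m; intros I H01 Hd; simpl. lra. destruct (H01 m) as [E|E].
  rewrite E. assert (rsum m I <= 1) by (apply IHm; auto; intros; apply Hd; lia). lra.
  rewrite (rsum_ext m I (fun _ => 0)). rewrite rsum_zero; lra.
  intros j Hj. specialize (Hd j m ltac:(lia) ltac:(lia) ltac:(lia)). destruct (H01 j); lra. Qed.

Definition mu (p : nat) (T : R) (A : nat -> nat -> R) (f : nat -> R) (i : nat) : R := T * rsum p (fun j => A i j * f j).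
Definition prob (n p : nat) (T : R) (A : nat -> nat -> R) (f : nat -> R) (y : nat -> nat) : R :=
  rprod n (fun i => poisson_pmf (mu p T A f i) (y i)).

Lemma A_bounds : forall n p a_l a_u At i j, a_l < a_u -> (1 <= n)%nat -> assumption1 n p a_l a_u At -> (i < n)%nat -> (j < p)%nat ->
  / (2 * INR n) <= A_of n a_l a_u At i j <= / INR n.
Proof. intros n p a_l a_u At i j Hlu Hn H1 Hi Hj. specialize (H1 i j Hi Hj). unfold A_of.
  assert (Hs : 0 < sqrt (INR n)) by (apply sqrt_p_pos; auto). assert (Hss : sqrt (INR n) * sqrt (INR n) = INR n) by (apply sqrt_sqrt; apply pos_INR).
  set (s := sqrt (INR n)) in *. rewrite <- Hss. destruct H1 as [Hl Hu].
  assert (Hd : 0 < / (2 * (a_u - a_l) * s)) by (apply Rinv_0_lt_compat; nra).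
  split.
  - apply Rle_trans with ((a_l / s + (a_u - 2 * a_l) / s) / (2 * (a_u - a_l) * s)).
    right. field. lra. unfold Rdiv at 3 4. apply Rmult_le_compat_r; lra.
  - apply Rle_trans with ((a_u / s + (a_u - 2 * a_l) / s) / (2 * (a_u - a_l) * s)).
    unfold Rdiv at 3 4. apply Rmult_le_compat_r; lra. right. field. lra. Qed.

Lemma mu_bounds : forall n p a_l a_u At T f i, a_l < a_u -> (1 <= n)%nat -> assumption1 n p a_l a_u At -> (i < n)%nat -> 0 < T ->
  (forall j, (j < p)%nat -> 0 <= f j) -> rsum p f = 1 ->
  T / (2 * INR n) <= mu p T (A_of n a_l a_u At) f i <= T.
Proof. intros. unfold mu. assert (1 <= INR n) by (apply (le_INR 1); auto).
  split.
  - replace (T / (2 * INR n)) with (T * rsum p (fun j => / (2 * INR n) * f j)) by (rewrite rsum_scal, H5; field; lra).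
    apply Rmult_le_compat_l; [lra|]. apply rsum_le; intros. apply Rmult_le_compat_r; auto. eapply A_bounds; eauto.
  - rewrite <- (Rmult_1_r T) at 2. apply Rmult_le_compat_l; [lra|]. rewrite <- H5. apply rsum_le; intros.
    assert (A_of n a_l a_u At i i0 <= 1). eapply Rle_trans. eapply A_bounds; eauto. rewrite <- Rinv_1. apply Rinv_le_contravar; lra.
    specialize (H4 i0 H7). assert (0 <= A_of n a_l a_u At i i0) by (eapply Rle_trans; [|eapply A_bounds; eauto]; left; apply Rinv_0_lt_compat; lra). nra. Qed.

Lemma pbox_eq : forall n p M T A f, box_sum n M (prob n p T A f) = rprod n (fun i => rsum M (poisson_pmf (mu p T A f i))).
Proof. intros. unfold prob. apply (box_sum_prod n M (fun i yi => poisson_pmf (mu p T A f i) yi)). Qed.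

Lemma pbox_bnds : forall n p M T A f, (forall i, (i < n)%nat -> 0 <= mu p T A f i <= T) ->
  1 - INR n * (exp T - Sexp M T) <= box_sum n M (prob n p T A f) <= 1.
Proof. intros. rewrite pbox_eq. split.
  - eapply Rle_trans; [| apply rprod_ge]. rewrite <- rsum_const. 
    assert (rsum n (fun i => 1 - rsum M (poisson_pmf (mu p T A f i))) <= rsum n (fun _ => exp T - Sexp M T)).
    apply rsum_le; intros. destruct (pbox_bounds M (mu p T A f i) T); auto. lra. lra.
    intros. split. apply rsum_nonneg; intros; apply pmf_nonneg; apply H; auto. apply (pbox_bounds M _ T); auto.
  - replace 1 with (rprod n (fun _ => 1)). apply rprod_le. intros. split. apply rsum_nonneg; intros; apply pmf_nonneg; apply H; auto.
    apply (pbox_bounds M _ T); auto. clear; induction n; simpl; lra. Qed.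

Lemma prob_pos : forall n p T A f y, (forall i, (i < n)%nat -> 0 < mu p T A f i) -> 0 < prob n p T A f y.
Proof. intros. apply rprod_pos; intros. apply pmf_pos; auto. Qed.

Lemma rprod_sqdiv : forall m a b, (forall i, (i < m)%nat -> b i <> 0) ->
  rprod m (fun i => a i ^ 2 / b i) = rprod m a ^ 2 / rprod m b.
Proof. induction m; intros; cbn [rprod]. field. rewrite IHm by (intros; apply H; lia).
  assert (rprod m b <> 0). { clear IHm. induction m. simpl; lra. simpl. apply Rmult_integral_contrapositive; split; [apply IHm|]; intros; apply H; lia. }
  assert (b m <> 0) by (apply H; lia). field; tauto. Qed.

Lemma chi_box : forall n p M T A f1 f0, (forall i, (i < n)%nat -> 0 < mu p T A f0 i) -> (forall i, (i < n)%nat -> 0 <= mu p T A f1 i) ->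
  box_sum n M (fun y => prob n p T A f1 y ^ 2 / prob n p T A f0 y) <=
  exp (rsum n (fun i => (mu p T A f1 i - mu p T A f0 i) ^ 2 / mu p T A f0 i)).
Proof. intros.
  pose proof (box_sum_prod n M (fun i yi => poisson_pmf (mu p T A f1 i) yi ^ 2 / poisson_pmf (mu p T A f0 i) yi)) as E. cbv beta in E.
  rewrite (box_sum_ext n M _ (fun y => rprod n (fun i => poisson_pmf (mu p T A f1 i) (y i) ^ 2 / poisson_pmf (mu p T A f0 i) (y i)))).
  rewrite E. rewrite <- rprod_exp. apply rprod_le. intros. split.
  apply rsum_nonneg; intros. apply Rmult_le_pos. apply pow2_ge_0. left; apply Rinv_0_lt_compat, pmf_pos; auto.
  apply chi_coord; auto.
  intros y. unfold prob. rewrite rprod_sqdiv; auto. intros. apply Rgt_not_eq, pmf_pos; auto. Qed.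

Lemma block_inj : forall q B L b l, (L < q)%nat -> (l < q)%nat -> (B * q + L = b * q + l)%nat -> B = b /\ L = l.
Proof. intros. destruct (divmod_block q B L H) as [E1 E2]. destruct (divmod_block q b l H0) as [E3 E4].
  rewrite H1 in E1, E2. split; congruence. Qed.

Definition eqi (a b : nat) : R := if Nat.eqb a b then 1 else 0.

Lemma uv_diff : forall k q v b l l' j, (b < k)%nat -> (l < q)%nat -> (l' < q)%nat ->
  uv k q (upd v b l) j - uv k q (upd v b l') j = eqi j (b * q + l) - eqi j (b * q + l').
Proof. intros k q v b l l' j Hb Hl Hl'. unfold eqi. destruct (lt_dec j (k * q)).
  - destruct (uv_dec k q j ltac:(lia) l0) as [Hj [HB HL]]. set (B := (j / q)%nat) in *. set (L := (j mod q)%nat) in *.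
    clearbody B L. subst j. rewrite !uv_block by auto. unfold upd.
    destruct (Nat.eqb B b) eqn:EB.
    + apply Nat.eqb_eq in EB; subst B.
      destruct (Nat.eqb L l) eqn:E1; destruct (Nat.eqb L l') eqn:E2;
      destruct (Nat.eqb (b * q + L) (b * q + l)) eqn:E3; destruct (Nat.eqb (b * q + L) (b * q + l')) eqn:E4;
      rewrite ?Nat.eqb_eq, ?Nat.eqb_neq in *; try lra; lia.
    + apply Nat.eqb_neq in EB.
      replace (Nat.eqb (B * q + L) (b * q + l)) with false by (symmetry; apply Nat.eqb_neq; intro Hc; apply block_inj in Hc; tauto).
      replace (Nat.eqb (B * q + L) (b * q + l')) with false by (symmetry; apply Nat.eqb_neq; intro Hc; apply block_inj in Hc; tauto).
      lra.
  - rewrite !uv_out by lia.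
    replace (Nat.eqb j (b * q + l)) with false by (symmetry; apply Nat.eqb_neq; nia).
    replace (Nat.eqb j (b * q + l')) with false by (symmetry; apply Nat.eqb_neq; nia). lra. Qed.

Definition ed (c1 c2 : nat) (L : nat) : R := eqi L c1 - eqi L c2.

Lemma wv_diff : forall k q v b l l' L, (b < k)%nat -> (l < q)%nat -> (l' < q)%nat ->
  wv k q (upd v b l) L - wv k q (upd v b l') L = ed (S (b * q + l)) (S (b * q + l')) L.
Proof. intros. unfold ed, eqi. destruct L; simpl. lra. fold (eqi L (b * q + l)). fold (eqi L (b * q + l')). apply uv_diff; auto. Qed.

Lemma ed_sqnorm : forall p c1 c2, (c1 < p)%nat -> (c2 < p)%nat -> c1 <> c2 -> sqnorm p (ed c1 c2) = 2.
Proof. intros. unfold sqnorm, ed, eqi.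
  rewrite (rsum_ext p _ (fun L => (if Nat.eqb L c1 then 1 else 0) + (if Nat.eqb L c2 then 1 else 0))).
  rewrite rsum_plus, !rsum_indic by auto. lra.
  intros. destruct (Nat.eqb i c1) eqn:E1; destruct (Nat.eqb i c2) eqn:E2; try lra.
  apply Nat.eqb_eq in E1; apply Nat.eqb_eq in E2; subst; lia. Qed.

Lemma ed_nnz : forall p c1 c2, (nnz p (ed c1 c2) <= 2)%nat.
Proof. intros. eapply Nat.le_trans. apply (nnz_two p (ed c1 c2) c1 c2). intros j Hj. unfold ed, eqi in Hj.
  destruct (Nat.eqb j c1) eqn:E1. left; apply Nat.eqb_eq; auto. destruct (Nat.eqb j c2) eqn:E2. right; apply Nat.eqb_eq; auto. lra.
  destruct (Nat.ltb c1 p); destruct (Nat.ltb c2 p); lia. Qed.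

Lemma ed_colsum : forall p D c1 c2, orthonormal_D p D -> (1 <= c1)%nat -> (1 <= c2)%nat ->
  rsum p (fun j => rsum p (fun L => D j L * ed c1 c2 L)) = 0.
Proof. intros. rewrite rsum_exchange. rewrite (rsum_ext p _ (fun _ => 0)). apply rsum_zero.
  intros L HL. rewrite (rsum_ext p _ (fun j => ed c1 c2 L * D j L)) by (intros; ring). rewrite rsum_scal.
  destruct L. unfold ed, eqi. replace (Nat.eqb 0 c1) with false by (symmetry; apply Nat.eqb_neq; lia).
  replace (Nat.eqb 0 c2) with false by (symmetry; apply Nat.eqb_neq; lia). ring.
  rewrite col_sum_zero by (auto; lia). ring. Qed.

Lemma mu_diff : forall n p a_l a_u At D T t k q v b l l' i, orthonormal_D p D -> a_l < a_u -> (1 <= n)%nat -> (b < k)%nat -> (l < q)%nat -> (l' < q)%nat ->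
  mu p T (A_of n a_l a_u At) (fv p D t k q (upd v b l)) i - mu p T (A_of n a_l a_u At) (fv p D t k q (upd v b l')) i =
  T * t / (2 * (a_u - a_l) * sqrt (INR n)) * rsum p (fun j => At i j * rsum p (fun L => D j L * ed (S (b * q + l)) (S (b * q + l')) L)).
Proof. intros. unfold mu, fv, A_of. rewrite <- Rmult_minus_distr_l, <- rsum_minus.
  assert (Hc : forall j, (/ INR p + t * rsum p (fun L => D j L * wv k q (upd v b l) L)) - (/ INR p + t * rsum p (fun L => D j L * wv k q (upd v b l') L))
     = t * rsum p (fun L => D j L * ed (S (b * q + l)) (S (b * q + l')) L)).
  { intros. rewrite (rsum_ext p (fun L => D j L * ed (S (b * q + l)) (S (b * q + l')) L) (fun L => D j L * wv k q (upd v b l) L - D j L * wv k q (upd v b l') L))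
      by (intros; rewrite <- (wv_diff k q v b l l') by auto; ring).
    rewrite rsum_minus. ring. }
  assert (Hs : 0 < sqrt (INR n)) by (apply sqrt_p_pos; auto).
  rewrite (rsum_ext p _ (fun j => t / (2 * (a_u - a_l) * sqrt (INR n)) * (At i j * rsum p (fun L => D j L * ed (S (b * q + l)) (S (b * q + l')) L)) +
                                    (t * ((a_u - 2 * a_l) / sqrt (INR n)) / (2 * (a_u - a_l) * sqrt (INR n))) * rsum p (fun L => D j L * ed (S (b * q + l)) (S (b * q + l')) L))).
  rewrite rsum_plus, !rsum_scal. rewrite ed_colsum by (auto; lia). field. lra.
  intros j Hj. rewrite <- Rmult_minus_distr_l. rewrite Hc. field. lra. Qed.

Lemma chi_bound : forall n p s a_l a_u At D T t delta k q v b l l',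
  orthonormal_D p D -> a_l < a_u -> (1 <= n)%nat -> (1 <= s)%nat -> assumption1 n p a_l a_u At -> assumption2 n p s At D delta ->
  0 <= delta -> 0 < T -> (b < k)%nat -> (l < q)%nat -> (l' < q)%nat -> l <> l' -> (k * q <= p - 1)%nat ->
  (forall j, (j < p)%nat -> 0 <= fv p D t k q (upd v b l') j) -> rsum p (fv p D t k q (upd v b l')) = 1 ->
  rsum n (fun i => (mu p T (A_of n a_l a_u At) (fv p D t k q (upd v b l)) i - mu p T (A_of n a_l a_u At) (fv p D t k q (upd v b l')) i) ^ 2
                   / mu p T (A_of n a_l a_u At) (fv p D t k q (upd v b l')) i)
  <= T * t ^ 2 * (1 + delta) / (a_u - a_l) ^ 2.
Proof. intros n p s a_l a_u At D T t delta k q v b l l' HD Hlu Hn Hs H1 H2 Hd HT Hb Hl Hl' Hll' Hkq Hf0 Hf1.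
  set (X := fun i => rsum p (fun j => At i j * rsum p (fun L => D j L * ed (S (b * q + l)) (S (b * q + l')) L))).
  assert (Hsn : 0 < sqrt (INR n)) by (apply sqrt_p_pos; auto).
  assert (Hnn : sqrt (INR n) * sqrt (INR n) = INR n) by (apply sqrt_sqrt, pos_INR).
  assert (HN : 1 <= INR n) by (apply (le_INR 1); auto).
  set (K := T * t ^ 2 / (2 * (a_u - a_l) ^ 2)).
  apply Rle_trans with (rsum n (fun i => K * X i ^ 2)).
  - apply rsum_le; intros i Hi. rewrite (mu_diff n p a_l a_u At D T t k q v b l l' i) by auto. fold (X i).
    destruct (mu_bounds n p a_l a_u At T (fv p D t k q (upd v b l')) i Hlu Hn H1 Hi HT Hf0 Hf1) as [Hm _].
    set (m0 := mu p T (A_of n a_l a_u At) (fv p D t k q (upd v b l')) i) in *.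
    assert (Hm0 : 0 < m0) by (eapply Rlt_le_trans; [|apply Hm]; apply Rdiv_lt_0_compat; lra).
    apply Rle_trans with ((T * t / (2 * (a_u - a_l) * sqrt (INR n)) * X i) ^ 2 * (2 * INR n / T)).
    + unfold Rdiv at 1. apply Rmult_le_compat_l. apply pow2_ge_0.
      replace (2 * INR n / T) with (/ (T / (2 * INR n))) by (field; lra). apply Rinv_le_contravar; auto. apply Rdiv_lt_0_compat; lra.
    + right. unfold K. set (sn := sqrt (INR n)) in *. rewrite <- Hnn. field. split; lra.
  - rewrite rsum_scal. 
    assert (HA : sqnorm n X <= (1 + delta) * sqnorm p (ed (S (b * q + l)) (S (b * q + l')))).
    { apply H2. eapply Nat.le_trans. apply ed_nnz. lia. }
    rewrite ed_sqnorm in HA by nia. unfold sqnorm in HA.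
    assert (0 <= K) by (unfold K; apply Rmult_le_pos; [apply Rmult_le_pos; [lra| apply pow2_ge_0]| left; apply Rinv_0_lt_compat; nra]).
    apply Rle_trans with (K * ((1 + delta) * 2)). apply Rmult_le_compat_l; auto. right. unfold K. field. lra. Qed.

Lemma point_ineq : forall lam P0 Pj I, 0 < lam -> 0 < P0 -> (I = 0 \/ I = 1) ->
  Pj * I <= (1 + / (2 * lam)) * P0 * I + lam / 2 * (Pj ^ 2 / P0 - 2 * Pj + P0).
Proof. intros lam P0 Pj I Hl HP HI.
  assert (E : Pj ^ 2 / P0 - 2 * Pj + P0 = (Pj - P0) ^ 2 / P0) by (field; lra).
  assert (0 <= (Pj - P0) ^ 2 / P0) by (apply Rmult_le_pos; [apply pow2_ge_0| left; apply Rinv_0_lt_compat; auto]).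
  destruct HI as [-> | ->].
  - rewrite E. nra.
  - assert (E2 : (1 + / (2 * lam)) * P0 * 1 + lam / 2 * (Pj ^ 2 / P0 - 2 * Pj + P0) - Pj * 1 = (P0 - lam * (Pj - P0)) ^ 2 / (2 * lam * P0)) by (field; lra).
    assert (0 <= (P0 - lam * (Pj - P0)) ^ 2 / (2 * lam * P0)) by (apply Rmult_le_pos; [apply pow2_ge_0| left; apply Rinv_0_lt_compat; nra]).
    lra. Qed.

Lemma block_abstract : forall n M m (P0 : (nat -> nat) -> R) (Pj I : nat -> (nat -> nat) -> R) lam,
  0 < lam -> (forall y, 0 < P0 y) -> (forall j y, I j y = 0 \/ I j y = 1) -> (forall y, rsum m (fun j => I j y) <= 1) ->
  rsum m (fun j => box_sum n M (fun y => Pj j y * I j y)) <=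
  (1 + / (2 * lam)) * box_sum n M P0 + lam / 2 * rsum m (fun j => box_sum n M (fun y => Pj j y ^ 2 / P0 y) - 2 * box_sum n M (Pj j) + box_sum n M P0).
Proof. intros n M m P0 Pj I lam Hl HP HI HS.
  rewrite <- (box_sum_rsum n M m (fun j y => Pj j y * I j y)).
  rewrite (rsum_ext m _ (fun j => box_sum n M (fun y => Pj j y ^ 2 / P0 y - 2 * Pj j y + P0 y))).
  rewrite <- (box_sum_rsum n M m (fun j y => Pj j y ^ 2 / P0 y - 2 * Pj j y + P0 y)).
  rewrite <- box_sum_scal, <- box_sum_scal, <- box_sum_plus. apply box_sum_le_in; intros y _.
  apply Rle_trans with (rsum m (fun j => (1 + / (2 * lam)) * P0 y * I j y + lam / 2 * (Pj j y ^ 2 / P0 y - 2 * Pj j y + P0 y))).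
  apply rsum_le; intros. apply point_ineq; auto.
  rewrite rsum_plus, rsum_scal, rsum_scal.
  assert (0 < / (2 * lam)) by (apply Rinv_0_lt_compat; lra). specialize (HS y). specialize (HP y).
  apply Rplus_le_compat_r. rewrite <- (Rmult_1_r ((1 + / (2 * lam)) * P0 y)) at 2. apply Rmult_le_compat_l; auto. apply Rmult_le_pos; lra.
  intros j Hj. rewrite box_sum_plus, box_sum_minus, box_sum_scal. auto. Qed.

Lemma fold_Rmax_cases : forall l a, fold_right Rmax a l = a \/ In (fold_right Rmax a l) l.
Proof. induction l; intros; simpl; auto. destruct (Rle_or_lt a (fold_right Rmax a0 l)).
  rewrite Rmax_right by auto. destruct (IHl a0) as [E|E]; [left; auto| right; right; auto].
  rewrite Rmax_left by lra. right; left; auto. Qed.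

Lemma lb_max_attained : forall p s T delta D, (1 <= s)%nat ->
  exists k, (1 <= k <= s)%nat /\ lb_max p s T delta D = lb_term p T delta D k.
Proof. intros. unfold lb_max. destruct (fold_Rmax_cases (map (lb_term p T delta D) (seq 1 s)) (lb_term p T delta D 1)) as [E|E].
  exists 1%nat; split; [lia| auto]. apply in_map_iff in E. destruct E as [k [E Hk]]. apply in_seq in Hk.
  exists k; split; [lia| auto]. Qed.

Lemma Rmin_scal : forall c a b, 0 <= c -> c * Rmin a b = Rmin (c * a) (c * b).
Proof. intros. destruct (Rle_or_lt a b).
  rewrite Rmin_left, Rmin_left; auto. apply Rmult_le_compat_l; auto.
  rewrite Rmin_right, Rmin_right; auto; try lra. apply Rmult_le_compat_l; lra. Qed.

Lemma Rmin_lower : forall a b g, 0 <= a -> 0 <= b -> 0 < g -> Rmin 1 g * Rmin a b <= Rmin a (g * b).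
Proof. intros. pose proof (Rmin_l 1 g). pose proof (Rmin_r 1 g). pose proof (Rmin_l a b). pose proof (Rmin_r a b).
  assert (0 <= Rmin 1 g) by (apply Rmin_glb; lra). assert (0 <= Rmin a b) by (apply Rmin_glb; lra).
  apply Rmin_glb; nra. Qed.

Lemma pow4_ge : forall z, 0 <= z -> 1 + 4 * z + 6 * z ^ 2 <= (1 + z) ^ 4.
Proof. intros. pose proof (pow2_ge_0 z). assert (0 <= z ^ 3) by (apply pow_le; auto). assert (0 <= z ^ 4) by (apply pow_le; auto).
  replace ((1 + z) ^ 4) with (1 + 4 * z + 6 * z ^ 2 + 4 * z ^ 3 + z ^ 4) by ring. lra. Qed.

Lemma m_le_pow16 : forall m, 0 <= m -> m <= (1 + m / 32) ^ 16.
Proof. intros. set (x := m / 32). assert (0 <= x) by (unfold x; lra).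
  replace 16%nat with (4 * 4)%nat by auto. rewrite pow_mult.
  set (w := 4 * x + 6 * x ^ 2). assert (0 <= w) by (unfold w; pose proof (pow2_ge_0 x); lra).
  assert (1 + w <= (1 + x) ^ 4) by (unfold w; replace (1 + (4 * x + 6 * x ^ 2)) with (1 + 4 * x + 6 * x ^ 2) by ring; apply pow4_ge; auto).
  assert ((1 + w) ^ 4 <= ((1 + x) ^ 4) ^ 4) by (apply pow_incr; lra).
  pose proof (pow4_ge w H1).
  assert (w >= 4 * x) by (unfold w; pose proof (pow2_ge_0 x); lra).
  assert (w ^ 2 >= 16 * x ^ 2) by (simpl; nra).
  assert (m = 32 * x) by (unfold x; field). pose proof (pow2_ge_0 (x - 1/12)). simpl in *. nra. Qed.

Lemma ln_le' : forall x y, 0 < x -> x <= y -> ln x <= ln y.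
Proof. intros. destruct H0. left; apply ln_increasing; auto. subst; lra. Qed.

Lemma lnR_bound : forall m r, 2 <= m -> 1 <= r -> r <= 2 * (m + 2) -> ln r <= 48 * ln (1 + m / 32).
Proof. intros.
  assert (r <= m ^ 3) by (simpl; nra).
  assert (m ^ 3 <= (1 + m / 32) ^ (16 * 3)).
  { rewrite pow_mult. apply pow_incr. split; [lra| apply m_le_pow16; lra]. }
  assert (E : ln ((1 + m / 32) ^ (16 * 3)) = INR (16 * 3) * ln (1 + m / 32)) by (apply ln_pow; lra).
  assert (E2 : INR (16 * 3) = 48) by (rewrite mult_INR; simpl; lra).
  rewrite E2 in E. rewrite <- E. apply ln_le'; lra. Qed.

Lemma Rdiv_nn : forall a b, 0 <= a -> 0 < b -> 0 <= a / b.
Proof. intros. unfold Rdiv. apply Rmult_le_pos; auto. left; apply Rinv_0_lt_compat; auto. Qed.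

Lemma exp_mono : forall x y, x <= y -> exp x <= exp y.
Proof. intros. destruct H. left; apply exp_increasing; auto. subst; lra. Qed.

Theorem theorem1 :
  forall a_l a_u : R, a_l < a_u ->
  exists C_L : R, 0 < C_L /\
  forall (n p s : nat) (T delta : R) (D At : nat -> nat -> R),
    (1 <= n)%nat -> (10 <= p)%nat -> (1 <= s)%nat -> INR s < INR p / 3 - 1 ->
    0 < T ->
    orthonormal_D p D ->
    assumption1 n p a_l a_u At ->
    0 <= delta < 1 ->
    assumption2 n p s At D delta ->
    forall fhat : (nat -> nat) -> nat -> R,
    forall c : R, c < C_L * lb_max p s T delta D ->
    exists f : nat -> R, in_F p s D f /\
      exists M : nat, c < partial_risk n p T (A_of n a_l a_u At) f fhat M.
Proof.
  intros a_l a_u Hlu.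
  set (gam := (a_u - a_l) ^ 2 / 48).
  assert (Hgam : 0 < gam) by (unfold gam; apply Rdiv_lt_0_compat; [apply pow_lt; lra| lra]).
  exists (Rmin 1 gam / 8). split. apply Rdiv_lt_0_compat; [apply Rmin_glb_lt; lra| lra].
  intros n p s T delta D At Hn Hp Hs Hsp HT HD H1 [Hd0 Hd1] H2 fhat c Hc.
  destruct (lb_max_attained p s T delta D Hs) as [k [Hk Hlb]]. rewrite Hlb in Hc.
  assert (Hk3 : (3 * k + 3 < p)%nat).
  { assert (INR k <= INR s) by (apply le_INR; lia). apply INR_lt. rewrite plus_INR, mult_INR.
    replace (INR 3) with 3 by (simpl; lra). lra. }
  set (q := ((p - 1) / k)%nat).
  assert (Hq3 : (3 <= q)%nat) by (apply Nat.div_le_lower_bound; lia).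
  assert (Hkq : (k * q <= p - 1)%nat) by (apply Nat.Div0.mul_div_le).
  assert (Hkq2 : (p - 1 < k * (q + 1))%nat).
  { pose proof (Nat.div_mod_eq (p - 1) k). pose proof (Nat.mod_upper_bound (p - 1) k ltac:(lia)). fold q in H. nia. }
  set (m := (q - 1)%nat).
  assert (Hm2 : (2 <= m)%nat) by lia.
  assert (Hmr : 2 <= INR m) by (replace 2 with (INR 2) by (simpl; lra); apply le_INR; lia).
  assert (Hkr : 1 <= INR k) by (apply (le_INR 1); lia).
  assert (Hpr : 0 < INR p) by (apply lt_0_INR; lia).
  assert (Hnr : 1 <= INR n) by (apply (le_INR 1); auto).
  set (lam := lambda_loc p D k).
  assert (Hlam : 0 <= lam) by apply fold_Rmax_ge0.
  set (Y := (a_u - a_l) ^ 2 * ln (1 + INR m / 32) / (T * (1 + delta))).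
  assert (Hln : 0 < ln (1 + INR m / 32)) by (rewrite <- ln_1; apply ln_increasing; lra).
  assert (HY : 0 < Y) by (unfold Y; apply Rdiv_lt_0_compat; [apply Rmult_lt_0_compat; [apply pow_lt; lra| auto]| nra]).
  assert (Hinv : 0 <= / (INR p ^ 2 * lam ^ 2)).
  { destruct (Req_dec lam 0) as [E|E]. rewrite E. replace (INR p ^ 2 * 0 ^ 2) with 0 by ring. rewrite Rinv_0; lra.
    left; apply Rinv_0_lt_compat. apply Rmult_lt_0_compat; apply pow_lt; lra. }
  set (t2 := Rmin (/ (INR p ^ 2 * lam ^ 2)) Y).
  assert (Ht2 : 0 <= t2) by (apply Rmin_glb; lra).
  set (t := sqrt t2).
  assert (Ht : 0 <= t) by apply sqrt_pos.
  assert (Htt : t ^ 2 = t2) by (unfold t; simpl; rewrite Rmult_1_r; apply sqrt_sqrt; auto).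
  assert (Htlam : t * lam <= / INR p).
  { destruct (Req_dec lam 0) as [E|E]. rewrite E, Rmult_0_r; left; apply Rinv_0_lt_compat; auto.
    assert (Hl0 : 0 < lam) by lra.
    assert (t ^ 2 <= / (INR p ^ 2 * lam ^ 2)) by (rewrite Htt; apply Rmin_l).
    assert (t ^ 2 * (INR p ^ 2 * lam ^ 2) <= 1).
    { replace 1 with (/ (INR p ^ 2 * lam ^ 2) * (INR p ^ 2 * lam ^ 2)) by (field; lra).
      apply Rmult_le_compat_r; auto. apply Rmult_le_pos; apply pow2_ge_0. }
    apply Rnot_lt_le; intro Hc'.
    assert (1 < t * lam * INR p) by (replace 1 with (/ INR p * INR p) by (field; lra); apply Rmult_lt_compat_r; auto).
    simpl in H0. nra. }
  assert (Hte : 0 < / (64 * INR n)) by (apply Rinv_0_lt_compat; lra).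
  destruct (tail_small T (/ (64 * INR n)) Hte) as [M HM].
  assert (Htail : INR n * (exp T - Sexp M T) <= / 64).
  { destruct (exp_tail M T T) as [Ht0 _]; [lra|].
    apply Rle_trans with (INR n * / (64 * INR n)). apply Rmult_le_compat_l; lra. right; field; lra. }
  set (A := A_of n a_l a_u At).
  set (F := fun v => fv p D t k q v).
  assert (Hval : forall v, (forall i, (i < k)%nat -> (v i < q)%nat) ->
     in_F p s D (F v) /\ (forall j, (j < p)%nat -> 0 <= F v j) /\ rsum p (F v) = 1 /\
     (forall i, (i < n)%nat -> T / (2 * INR n) <= mu p T A (F v) i <= T) /\
     1 - / 64 <= box_sum n M (prob n p T A (F v)) <= 1).
  { intros v Hv.
    assert (Hnn : forall j, (j < p)%nat -> 0 <= F v j) by (intros; unfold F; eapply fv_nonneg; eauto).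
    assert (Hs1 : rsum p (F v) = 1) by (unfold F; apply fv_sum; auto).
    assert (Hmu : forall i, (i < n)%nat -> T / (2 * INR n) <= mu p T A (F v) i <= T) by (intros; unfold A; apply mu_bounds; auto).
    split; [unfold F; apply fv_inF; auto; lia|]. split; auto. split; auto. split; auto.
    destruct (pbox_bnds n p M T A (F v)) as [Hb1 Hb2].
    intros i Hi. destruct (Hmu i Hi). split; auto. apply Rle_trans with (T / (2 * INR n)); auto. left; apply Rdiv_lt_0_compat; lra.
    split; lra. }
  set (E := fun b v => box_sum n M (prob n p T A (F v)) - box_sum n M (fun y => prob n p T A (F v) y * ind p D t q (fhat y) b (v b))).
  assert (Hrisk : forall v, (forall i, (i < k)%nat -> (v i < q)%nat) ->
     t ^ 2 / 2 * rsum k (fun b => E b v) <= partial_risk n p T A (F v) fhat M).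
  { intros v Hv. destruct (Hval v Hv) as [_ [_ [_ [Hmu _]]]].
    change (t ^ 2 / 2 * rsum k (fun b => E b v) <= box_sum n M (fun y => prob n p T A (F v) y * sqnorm p (fun j => fhat y j - F v j))).
    apply Rle_trans with (box_sum n M (fun y => t ^ 2 / 2 * rsum k (fun b => prob n p T A (F v) y - prob n p T A (F v) y * ind p D t q (fhat y) b (v b)))).
    - right. rewrite box_sum_scal. f_equal. rewrite box_sum_rsum. apply rsum_ext; intros b Hb. unfold E. rewrite box_sum_minus. auto.
    - apply box_sum_le_in; intros y _.
      assert (Hpp : 0 < prob n p T A (F v) y) by (apply prob_pos; intros; eapply Rlt_le_trans; [|apply Hmu; auto]; apply Rdiv_lt_0_compat; lra).
      rewrite (rsum_ext k _ (fun b => prob n p T A (F v) y * (1 - ind p D t q (fhat y) b (v b)))) by (intros; ring).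
      rewrite rsum_scal. replace (t ^ 2 / 2 * (prob n p T A (F v) y * rsum k (fun b => 1 - ind p D t q (fhat y) b (v b))))
        with (prob n p T A (F v) y * (t ^ 2 / 2 * rsum k (fun b => 1 - ind p D t q (fhat y) b (v b)))) by ring.
      apply Rmult_le_compat_l; [lra|]. unfold F. apply loss_bound; auto. }
  assert (Hvu : forall v b j, inbox k m v -> (j < q)%nat -> forall i, (i < k)%nat -> (upd v b j i < q)%nat).
  { intros v b j Hv Hj i Hi. unfold upd. destruct (Nat.eqb i b); auto. specialize (Hv i Hi). unfold m in Hv; lia. }
  assert (Hchi : T * t ^ 2 * (1 + delta) / (a_u - a_l) ^ 2 <= ln (1 + INR m / 32)).
  { assert (t ^ 2 <= Y) by (rewrite Htt; apply Rmin_r).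
    apply Rle_trans with (T * Y * (1 + delta) / (a_u - a_l) ^ 2).
    unfold Rdiv. apply Rmult_le_compat_r. left; apply Rinv_0_lt_compat, pow_lt; lra.
    apply Rmult_le_compat_r. lra. apply Rmult_le_compat_l; lra.
    right; unfold Y; field. repeat split; try lra; apply pow_nonzero; lra. }
  assert (Hblock : forall v b, inbox k m v -> (b < k)%nat -> INR m / 4 <= rsum m (fun j => E b (upd v b j))).
  { intros v b Hv Hb.
    set (P0 := prob n p T A (F (upd v b m))).
    set (Pj := fun j => prob n p T A (F (upd v b j))).
    set (I := fun j (y : nat -> nat) => ind p D t q (fhat y) b j).
    assert (HE : forall j, E b (upd v b j) = box_sum n M (Pj j) - box_sum n M (fun y => Pj j y * I j y)).
    { intros. assert (Hu : upd v b j b = j) by (unfold upd; rewrite Nat.eqb_refl; auto).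
      unfold E, Pj, I. rewrite Hu. auto. }
    rewrite (rsum_ext m _ (fun j => box_sum n M (Pj j) - box_sum n M (fun y => Pj j y * I j y))) by (intros; apply HE).
    rewrite rsum_minus.
    assert (HS1 : INR m * (1 - / 64) <= rsum m (fun j => box_sum n M (Pj j))).
    { rewrite <- rsum_const. apply rsum_le; intros j Hj. destruct (Hval (upd v b j)) as [_ [_ [_ [_ Hb1]]]].
      apply Hvu; auto. unfold m in Hj; lia. unfold Pj. lra. }
    destruct (Hval (upd v b m)) as [_ [Hnn0 [Hs0 [Hmu0 Hb0]]]]. apply Hvu; auto. unfold m; lia.
    assert (HP0 : forall y, 0 < P0 y) by (intros; apply prob_pos; intros; eapply Rlt_le_trans; [|apply Hmu0; auto]; apply Rdiv_lt_0_compat; lra).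
    assert (Hlm : 0 < 4 / INR m) by (apply Rdiv_lt_0_compat; lra).
    pose proof (block_abstract n M m P0 Pj I (4 / INR m) Hlm HP0) as HB.
    assert (HI01 : forall j y, I j y = 0 \/ I j y = 1) by (intros; apply ind_01).
    assert (HIs : forall y, rsum m (fun j => I j y) <= 1).
    { intros y. apply sum01_le1; auto. intros j j' Hj Hj' Hjj. apply ind_disj; auto; unfold m in *; lia. }
    specialize (HB HI01 HIs).
    assert (Hterm : forall j, (j < m)%nat -> box_sum n M (fun y => Pj j y ^ 2 / P0 y) - 2 * box_sum n M (Pj j) + box_sum n M P0 <= INR m / 32 + / 32).
    { intros j Hj. destruct (Hval (upd v b j)) as [_ [_ [_ [Hmuj Hbj]]]]. apply Hvu; auto. unfold m in Hj; lia.
      assert (box_sum n M (fun y => Pj j y ^ 2 / P0 y) <= 1 + INR m / 32).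
      { unfold Pj, P0. eapply Rle_trans. apply chi_box.
        intros; eapply Rlt_le_trans; [|apply Hmu0; auto]; apply Rdiv_lt_0_compat; lra.
        intros; eapply Rle_trans; [|apply Hmuj; auto]; left; apply Rdiv_lt_0_compat; lra.
        rewrite <- (exp_ln (1 + INR m / 32)) by lra. apply exp_mono.
        eapply Rle_trans; [|apply Hchi]. unfold A, F. apply (chi_bound n p s a_l a_u At D T t delta k q v b j m); auto; unfold m in *; try lia. }
      unfold Pj, P0 in *. lra. }
    assert (HR : rsum m (fun j => box_sum n M (fun y => Pj j y ^ 2 / P0 y) - 2 * box_sum n M (Pj j) + box_sum n M P0) <= INR m * (INR m / 32 + / 32)).
    { rewrite <- rsum_const. apply rsum_le; auto. }
    replace (/ (2 * (4 / INR m))) with (INR m / 8) in HB by (field; lra).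
    assert (HR2 : 4 / INR m / 2 * rsum m (fun j => box_sum n M (fun y => Pj j y ^ 2 / P0 y) - 2 * box_sum n M (Pj j) + box_sum n M P0)
       <= INR m / 16 + / 16).
    { apply Rle_trans with (4 / INR m / 2 * (INR m * (INR m / 32 + / 32))). apply Rmult_le_compat_l; lra. right; field; lra. }
    destruct Hb0 as [Hb0a Hb0b]. fold P0 in Hb0a, Hb0b.
    assert ((1 + INR m / 8) * box_sum n M P0 <= 1 + INR m / 8) by (rewrite <- (Rmult_1_r (1 + INR m / 8)) at 2; apply Rmult_le_compat_l; lra).
    lra. }
  assert (Hsum : INR m ^ k * (INR k * t ^ 2 / 8) <= box_sum k m (fun v => partial_risk n p T A (F v) fhat M)).
  { apply Rle_trans with (box_sum k m (fun v => t ^ 2 / 2 * rsum k (fun b => E b v))).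
    2: { apply box_sum_le_in; intros v Hv. apply Hrisk. intros i Hi. specialize (Hv i Hi). unfold m in Hv; lia. }
    rewrite box_sum_scal, box_sum_rsum.
    assert (Hb : forall b, (b < k)%nat -> INR m ^ k / 4 <= box_sum k m (E b)).
    { intros b Hb. assert (Hmpos : 0 < INR m) by lra.
      pose proof (box_resample k m b (E b) Hb) as HRs.
      assert (INR m ^ k * (INR m / 4) <= box_sum k m (fun v => rsum m (fun j => E b (upd v b j)))).
      { rewrite <- box_sum_const. apply box_sum_le_in; intros v Hv. apply Hblock; auto. }
      rewrite HRs in H.
      apply Rmult_le_reg_l with (INR m); auto. replace (INR m * (INR m ^ k / 4)) with (INR m ^ k * (INR m / 4)) by field. auto. }
    apply Rle_trans with (t ^ 2 / 2 * rsum k (fun _ => INR m ^ k / 4)).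
    rewrite rsum_const. right; field.
    apply Rmult_le_compat_l. apply Rmult_le_pos; [apply pow2_ge_0| lra]. apply rsum_le; auto. }
  assert (Hcmp : Rmin 1 gam / 8 * lb_term p T delta D k <= INR k * t ^ 2 / 8).
  { set (rr := (INR p - INR k - 1) / (INR k / 2)).
    assert (Hp1 : 3 * INR k + 4 <= INR p).
    { assert (Hh : (3 * k + 4 <= p)%nat) by lia. apply le_INR in Hh. rewrite plus_INR, mult_INR in Hh.
      replace (INR 3) with 3 in Hh by (simpl; lra). replace (INR 4) with 4 in Hh by (simpl; lra). lra. }
    assert (Hp2 : INR p < INR k * (INR m + 2) + 1).
    { assert (Hh : (p < k * (m + 2) + 1)%nat) by (unfold m; nia). apply lt_INR in Hh. rewrite plus_INR, mult_INR, plus_INR in Hh.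
      replace (INR 2) with 2 in Hh by (simpl; lra). simpl in Hh. lra. }
    assert (Hrr : rr * (INR k / 2) = INR p - INR k - 1) by (unfold rr; field; lra).
    assert (Hrr1 : 1 <= rr) by nra.
    assert (Hrr2 : rr <= 2 * (INR m + 2)) by nra.
    pose proof (lnR_bound (INR m) rr Hmr Hrr1 Hrr2) as Hl48.
    assert (Hl0 : 0 <= ln rr) by (rewrite <- ln_1; apply ln_le'; lra).
    unfold lb_term. fold lam. fold rr.
    set (a := INR k / (INR p ^ 2 * lam ^ 2)). set (bb := INR k / ((1 + delta) * T) * ln rr).
    assert (Ha : 0 <= a) by (unfold a, Rdiv; apply Rmult_le_pos; lra).
    assert (Hbb : 0 <= bb) by (unfold bb; apply Rmult_le_pos; auto; apply Rdiv_nn; nra).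
    assert (Hkt : INR k * t ^ 2 = Rmin a (INR k * Y)) by (rewrite Htt; unfold t2, a; rewrite Rmin_scal by lra; auto).
    assert (HkY : gam * bb <= INR k * Y).
    { unfold gam, bb, Y. apply Rle_trans with ((a_u - a_l) ^ 2 * INR k / (T * (1 + delta)) * (ln rr / 48)).
      right; field; lra. replace (INR k * ((a_u - a_l) ^ 2 * ln (1 + INR m / 32) / (T * (1 + delta)))) with
         ((a_u - a_l) ^ 2 * INR k / (T * (1 + delta)) * ln (1 + INR m / 32)) by (field; lra).
      apply Rmult_le_compat_l. apply Rdiv_nn. apply Rmult_le_pos; [apply pow2_ge_0| lra]. nra. lra. }
    assert (Rmin 1 gam * Rmin a bb <= INR k * t ^ 2).
    { rewrite Hkt. eapply Rle_trans. apply Rmin_lower; auto. apply Rmin_glb. apply Rmin_l. eapply Rle_trans; [apply Rmin_r| auto]. }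
    lra. }
  assert (Hmk : 0 < INR m ^ k) by (apply pow_lt; lra).
  assert (Hfin : INR m ^ k * c < box_sum k m (fun v => partial_risk n p T A (F v) fhat M)).
  { eapply Rlt_le_trans; [|apply Hsum]. apply Rmult_lt_compat_l; auto. lra. }
  destruct (box_sum_exists k m _ c Hfin) as [v [Hv Hcv]].
  assert (Hvq : forall i, (i < k)%nat -> (v i < q)%nat) by (intros i Hi; specialize (Hv i Hi); unfold m in Hv; lia).
  exists (F v). split. apply (Hval v Hvq). exists M. exact Hcv.
Qed.
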